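(* Let $d_1,d_2\in\mathbb{N}$ and let $X,Y\in\mathcal{M}_{d_1}\otimes\mathcal{M}_{d_1}$ satisfy: (i) $X\geq 0$ and $Y\geq 0$; (ii) $(d_2-1)X^\Gamma\geq -Y^\Gamma$ and $(d_2+1)X^\Gamma\geq Y^\Gamma$; (iii) there exists $\ket{\alpha}\in\mathbb{C}^{d_1}\otimes\mathbb{C}^{d_1}$ with $\bra{\alpha}X\ket{\alpha}=0$ and $\bra{\alpha}Y\ket{\alpha}>0$. Define on $\mathbb{C}^{d_1}\otimes\mathbb{C}^{d_1}\otimes\mathbb{C}^{d_2}\otimes\mathbb{C}^{d_2}$ (factors labelled $A_1,B_1,A_2,B_2$) \[ Z = X_{A_1B_1}\otimes(\mathbb{1}-\omega)_{A_2B_2} + Y_{A_1B_1}\otimes\omega_{A_2B_2}, \] where $\omega$ is the maximally entangled projector on $\mathbb{C}^{d_2}\otimes\mathbb{C}^{d_2}$. Then, regarded as a bipartite operator with respect to $A=A_1A_2$ and $B=B_1B_2$, $Z$ is positive semidefinite, has positive partial transpose, and satisfies $\mathrm{SN}(Z)\geq\lceil d_2/d_1\rceil$.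
   Context: $\mathcal{M}_d$: complex $d\times d$ matrices. $\omega=\ket{\Omega}\bra{\Omega}$, $\ket{\Omega}=\frac{1}{\sqrt{d_2}}\sum_i\ket{i}\otimes\ket{i}$. For $W$ on $\mathbb{C}^{d}\otimes\mathbb{C}^{d}$, $W^\Gamma=(\mathrm{id}\otimes T)(W)$ with $T$ the transposition in the computational basis; $P\geq Q$ means $P-Q$ is positive semidefinite. A bipartite positive semidefinite operator has positive partial transpose (PPT) if its partial transpose on the $B$ system is positive semidefinite. The Schmidt rank of a vector $\ket{\psi}\in\mathbb{C}^{d_A}\otimes\mathbb{C}^{d_B}$ is the rank of $\mathrm{tr}_A\ket{\psi}\bra{\psi}$. For a nonzero positive semidefinite operator $\rho$ on $\mathbb{C}^{d_A}\otimes\mathbb{C}^{d_B}$, the Schmidt number $\mathrm{SN}(\rho)$ is the minimum, over all decompositions $\rho=\sum_i p_i\ket{\psi_i}\bra{\psi_i}$ with $p_i>0$, of $\max_i$ (Schmidt rank of $\ket{\psi_i}$). $\lceil x\rceil$ is the ceiling function. *)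

(* Defs.v *)
From HB Require Import structures.
From mathcomp Require Import all_boot all_order all_algebra.
From mathcomp Require Import boolp reals.
From mathcomp Require Import complex mxtens.
Set Implicit Arguments. Unset Strict Implicit. Unset Printing Implicit Defensive.
Import Order.TTheory GRing.Theory Num.Theory.
Local Open Scope ring_scope.

Section QDefs.
Variable C : numClosedFieldType.

Definition adj m n (A : 'M[C]_(m, n)) : 'M[C]_(n, m) := (map_mx Num.conj A)^T.

Definition psd n (A : 'M[C]_n) : Prop :=
  adj A = A /\ forall v : 'cV[C]_n, 0 <= (adj v *m A *m v) 0 0.

(* bipartite operators on C^m (x) C^n are 'M_(m*n), basis |i,j> indexed by
   mxtens_index (i, j) (the convention of the Kronecker product *t). *)
Definition idx m n (i : 'I_m) (j : 'I_n) : 'I_(m * n) := mxtens_index (i, j).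

(* partial transpose on the second (B) factor: <ij|W^G|kl> = <il|W|kj> *)
Definition ptransB m n (W : 'M[C]_(m * n)) : 'M[C]_(m * n) :=
  \matrix_(p, q) W (idx (mxtens_unindex p).1 (mxtens_unindex q).2)
                   (idx (mxtens_unindex q).1 (mxtens_unindex p).2).

Definition ppt m n (W : 'M[C]_(m * n)) : Prop := psd W /\ psd (ptransB W).

Definition ptraceA m n (W : 'M[C]_(m * n)) : 'M[C]_n :=
  \matrix_(j, l) \sum_(i < m) W (idx i j) (idx i l).

Definition schmidt_rank m n (psi : 'cV[C]_(m * n)) : nat :=
  \rank (ptraceA (psi *m adj psi)).

Definition SN_le m n (rho : 'M[C]_(m * n)) (r : nat) : Prop :=
  exists (N : nat) (p : 'I_N -> C) (psi : 'I_N -> 'cV[C]_(m * n)),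
    [/\ forall i, 0 < p i,
        rho = \sum_(i < N) p i *: (psi i *m adj (psi i)) &
        forall i, (schmidt_rank (psi i) <= r)%N].

Lemma SN_ex_helper m n (rho : 'M[C]_(m * n)) :
  (exists r, SN_le rho r) -> exists r, `[< SN_le rho r >].
Proof. by case=> r h; exists r; apply/asboolP. Qed.

(* Schmidt number: minimal r such that SN_le rho r (0 if no decomposition). *)
Definition SN m n (rho : 'M[C]_(m * n)) : nat :=
  match pselect (exists r, SN_le rho r) with
  | left h => ex_minn (SN_ex_helper h)
  | right _ => 0%N
  end.

Definition Omega d : 'cV[C]_(d * d) :=
  \col_k (if (mxtens_unindex k).1 == (mxtens_unindex k).2
          then (sqrtC (d%:R))^-1 else 0).
Definition omega d : 'M[C]_(d * d) := Omega d *m adj (Omega d).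

(* regroup A1 B1 A2 B2 (operator on (m*n)*(p*q)) as A=A1A2, B=B1B2
   (operator on (m*p)*(n*q)) *)
Definition regroup m n p q (Z : 'M[C]_((m * n) * (p * q))) : 'M[C]_((m * p) * (n * q)) :=
  \matrix_(r, s)
    let a := mxtens_unindex (mxtens_unindex r).1 in
    let b := mxtens_unindex (mxtens_unindex r).2 in
    let a' := mxtens_unindex (mxtens_unindex s).1 in
    let b' := mxtens_unindex (mxtens_unindex s).2 in
    Z (idx (idx a.1 b.1) (idx a.2 b.2)) (idx (idx a'.1 b'.1) (idx a'.2 b'.2)).

End QDefs.

(* Main.v *)
Require Import Defs.
From HB Require Import structures.
From mathcomp Require Import all_boot all_order all_algebra.
From mathcomp Require Import boolp reals.
From mathcomp Require Import complex mxtens.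
From mathcomp Require Import ring zify.
Set Implicit Arguments. Unset Strict Implicit. Unset Printing Implicit Defensive.
Import Order.TTheory GRing.Theory Num.Theory.
Local Open Scope ring_scope.

Section Q.
Variable C : numClosedFieldType.
Implicit Types (m n p q : nat).

Lemma adjE m n (A : 'M[C]_(m,n)) i j : adj A i j = (A j i)^*.
Proof. by rewrite !mxE. Qed.

Lemma adjK m n (A : 'M[C]_(m,n)) : adj (adj A) = A.
Proof. by apply/matrixP=> i j; rewrite !adjE conjCK. Qed.

Lemma adjM m n p (A : 'M[C]_(m,n)) (B : 'M[C]_(n,p)) : adj (A *m B) = adj B *m adj A.
Proof.
apply/matrixP=> i j; rewrite !mxE rmorph_sum; apply: eq_bigr=> k _.
by rewrite !mxE rmorphM mulrC.
Qed.

Lemma adjD m n (A B : 'M[C]_(m,n)) : adj (A + B) = adj A + adj B.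
Proof. by apply/matrixP=> i j; rewrite !mxE rmorphD. Qed.

Lemma adjN m n (A : 'M[C]_(m,n)) : adj (- A) = - adj A.
Proof. by apply/matrixP=> i j; rewrite !mxE rmorphN. Qed.

Lemma adjZ m n c (A : 'M[C]_(m,n)) : adj (c *: A) = c^* *: adj A.
Proof. by apply/matrixP=> i j; rewrite !mxE rmorphM. Qed.

Lemma adj_sum m n k (F : 'I_k -> 'M[C]_(m,n)) : adj (\sum_i F i) = \sum_i adj (F i).
Proof.
apply/matrixP=> i j; rewrite adjE !summxE rmorph_sum; apply: eq_bigr=> l _.
by rewrite adjE.
Qed.

Lemma adj_tens m n p q (A : 'M[C]_(m,n)) (B : 'M[C]_(p,q)) : adj (A *t B) = adj A *t adj B.
Proof. by apply/matrixP=> i j; rewrite !mxE rmorphM. Qed.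

Lemma adj_scalar n c : adj (c%:M : 'M[C]_n) = c^*%:M.
Proof.
by apply/matrixP=> i j; rewrite !mxE eq_sym rmorphMn.
Qed.

Definition qf n (A : 'M[C]_n) (v : 'cV[C]_n) := (adj v *m A *m v) 0 0.

Lemma qfE n (A : 'M[C]_n) v :
  qf A v = \sum_k \sum_l (v k 0)^* * A k l * v l 0.
Proof.
rewrite /qf mxE exchange_big; apply: eq_bigr=> l _; rewrite mxE mulr_suml.
by apply: eq_bigr=> k _; rewrite adjE.
Qed.

Lemma sum_idx m n (F : 'I_(m * n) -> C) :
  \sum_k F k = \sum_i \sum_j F (idx i j).
Proof.
rewrite pair_big /= (reindex (fun p : 'I_m * 'I_n => idx p.1 p.2)) //=.
exists (@mxtens_unindex m n) => [[i j] _ | k _]; rewrite /idx ?mxtens_indexK //.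
by rewrite -surjective_pairing mxtens_unindexK.
Qed.

Lemma sum_delta n (j : 'I_n) (f : 'I_n -> C) : \sum_k (k == j)%:R * f k = f j.
Proof.
rewrite (bigD1 j) //= eqxx mul1r big1 ?addr0 // => k /negbTE ->.
by rewrite mul0r.
Qed.

Lemma sum_delta' n (j : 'I_n) (f : 'I_n -> C) : \sum_k f k * (k == j)%:R = f j.
Proof. by rewrite -[RHS](sum_delta j); apply: eq_bigr=> k _; rewrite mulrC. Qed.

Lemma scal_mx11 (A : 'M[C]_1) : A = (A 0 0)%:M.
Proof. by apply/matrixP=> i j; rewrite !ord1 !mxE eqxx mulr1n. Qed.

Lemma psdD n (A B : 'M[C]_n) : psd A -> psd B -> psd (A + B).
Proof.
move=> [hA pA] [hB pB]; split; first by rewrite adjD hA hB.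
move=> v; rewrite mulmxDr mulmxDl mxE; exact: addr_ge0.
Qed.

Lemma psdZ n c (A : 'M[C]_n) : 0 <= c -> psd A -> psd (c *: A).
Proof.
move=> c0 [hA pA]; split; first by rewrite adjZ hA conj_Creal // ger0_real.
move=> v; rewrite -scalemxAr -scalemxAl mxE; exact: mulr_ge0.
Qed.

Lemma psd0 n : psd (0 : 'M[C]_n).
Proof.
split; first by apply/matrixP=> i j; rewrite adjE !mxE rmorph0.
by move=> v; rewrite mulmx0 mul0mx mxE.
Qed.

Lemma psd_sum n k (F : 'I_k -> 'M[C]_n) : (forall i, psd (F i)) -> psd (\sum_i F i).
Proof.
move=> h; elim/big_rec: _; first exact: psd0.
by move=> i M _ hM; apply: psdD.
Qed.

Lemma qf_rank1 n (v w : 'cV[C]_n) :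
  qf (v *m adj v) w = (adj w *m v) 0 0 * ((adj w *m v) 0 0)^*.
Proof.
rewrite /qf !mulmxA -(mulmxA (adj w *m v)) [adj w *m v]scal_mx11.
have -> : adj v *m w = adj (adj w *m v) by rewrite adjM adjK.
rewrite [adj w *m v]scal_mx11 adj_scalar mul_scalar_mx scale_scalar_mx.
by rewrite !mxE eqxx mulr1n.
Qed.

Lemma psd_rank1 n (v : 'cV[C]_n) : psd (v *m adj v).
Proof.
split; first by rewrite adjM adjK.
by move=> w; rewrite -/(qf _ _) qf_rank1 mul_conjC_ge0.
Qed.

Lemma psd_decomp n k (p : 'I_k -> C) (psi : 'I_k -> 'cV[C]_n) :
  (forall i, 0 <= p i) -> psd (\sum_i p i *: (psi i *m adj (psi i))).
Proof. by move=> h; apply: psd_sum=> i; apply: psdZ=> //; apply: psd_rank1. Qed.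


Definition bf n (A : 'M[C]_n) (x y : 'cV[C]_n) := (adj x *m A *m y) 0 0.

Lemma bfE n (A : 'M[C]_n) x y :
  bf A x y = \sum_k \sum_l (x k 0)^* * A k l * y l 0.
Proof.
rewrite /bf mxE exchange_big; apply: eq_bigr=> l _; rewrite mxE mulr_suml.
by apply: eq_bigr=> k _; rewrite adjE.
Qed.

Lemma bfDl n (A : 'M[C]_n) x1 x2 y : bf A (x1 + x2) y = bf A x1 y + bf A x2 y.
Proof. by rewrite /bf adjD !mulmxDl mxE. Qed.
Lemma bfDr n (A : 'M[C]_n) x y1 y2 : bf A x (y1 + y2) = bf A x y1 + bf A x y2.
Proof. by rewrite /bf !mulmxDr mxE. Qed.
Lemma bfZl n (A : 'M[C]_n) c x y : bf A (c *: x) y = c^* * bf A x y.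
Proof. by rewrite /bf adjZ -!scalemxAl mxE. Qed.
Lemma bfZr n (A : 'M[C]_n) c x y : bf A x (c *: y) = c * bf A x y.
Proof. by rewrite /bf -!scalemxAr mxE. Qed.
Lemma bfNl n (A : 'M[C]_n) x y : bf A (- x) y = - bf A x y.
Proof. by rewrite -scaleN1r bfZl rmorphN1 mulN1r. Qed.
Lemma bfNr n (A : 'M[C]_n) x y : bf A x (- y) = - bf A x y.
Proof. by rewrite -scaleN1r bfZr mulN1r. Qed.

Definition ev n (i : 'I_n) : 'cV[C]_n := delta_mx i 0.

Lemma ev_entry n (i k : 'I_n) : ev i k 0 = (k == i)%:R.
Proof. by rewrite mxE eqxx andbT. Qed.

Lemma bf_ev n (A : 'M[C]_n) a b : bf A (ev a) (ev b) = A a b.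
Proof.
rewrite bfE; under eq_bigr => k _ do (under eq_bigr => l _ do
  rewrite !ev_entry rmorph_nat -mulrA); under eq_bigr => k _ do rewrite -mulr_sumr.
by rewrite sum_delta sum_delta'.
Qed.

Lemma bf_conj n (A : 'M[C]_n) x y : adj A = A -> bf A x y = (bf A y x)^*.
Proof.
move=> hA; rewrite /bf -{1}hA.
have -> : adj x *m adj A *m y = adj (adj y *m A *m x) by rewrite !adjM adjK mulmxA.
by rewrite adjE.
Qed.

Lemma psd_herm n (A : 'M[C]_n) i j : psd A -> A i j = (A j i)^*.
Proof. by case=> hA _; rewrite -{1}hA adjE. Qed.

Lemma psd_diag n (A : 'M[C]_n) i : psd A -> 0 <= A i i.
Proof. by case=> _ h; have := h (ev i); rewrite -/(bf _ _ _) bf_ev. Qed.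

Lemma psd_zero_diag n (A : 'M[C]_n) i j : psd A -> A j j = 0 -> A j i = 0.
Proof.
move=> hA hjj; apply/eqP/negP=> /negP hs.
set s := A j i; set a := A i i.
have a0 : 0 <= a := psd_diag i hA.
have ar : a^* = a by rewrite conj_Creal // ger0_real.
have hij : A i j = s^* := psd_herm i j hA.
set t := - (a + 1) / s^*.
have ht : t^* = - (a + 1) / s.
  rewrite /t fmorph_div rmorphN rmorphD rmorph1.
  by congr (- (_ + 1) / _); [exact: ar | exact: conjCK].
have s0 : s^* != 0 by rewrite conjC_eq0.
have := (hA.2 (t *: ev j + ev i)).
rewrite -/(bf _ _ _) !(bfDl, bfDr, bfZl, bfZr) !bf_ev hjj hij -/s -/a ht.
rewrite !mulr0 add0r divfK; last by rewrite -conjC_eq0.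
rewrite /t divfK //.
have -> : - (a + 1) + (- (a + 1) + a) = - (a + 2) by ring.
rewrite oppr_ge0 => h.
have h2 : (0:C) < 2 by rewrite ltr0n.
by have := lt_le_trans (ltr_wpDl a0 h2) h; rewrite ltxx.
Qed.

Lemma psd_zero n (A : 'M[C]_n) : psd A -> (forall j, A j j = 0) -> A = 0.
Proof.
move=> hA h; apply/matrixP=> j l; rewrite mxE; exact: psd_zero_diag.
Qed.

Lemma decomp_snoc n N (p : 'I_N -> C) (psi : 'I_N -> 'cV[C]_n) (c : C) (v : 'cV[C]_n) :
  (forall i, 0 < p i) -> 0 < c ->
  exists (p' : 'I_N.+1 -> C) (psi' : 'I_N.+1 -> 'cV[C]_n),
    (forall i, 0 < p' i) /\
    \sum_i p i *: (psi i *m adj (psi i)) + c *: (v *m adj v)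
      = \sum_i p' i *: (psi' i *m adj (psi' i)).
Proof.
move=> hp hc.
exists (fun j => if unlift ord_max j is Some k then p k else c).
exists (fun j => if unlift ord_max j is Some k then psi k else v).
split; first by move=> j; case: unlift.
rewrite big_ord_recr /= unlift_none; congr (_ + _); apply: eq_bigr => j _.
have -> : widen_ord (leqnSn N) j = lift ord_max j by apply: val_inj; rewrite [RHS]lift_max.
by rewrite liftK.
Qed.

Lemma bfMD n (A B : 'M[C]_n) x y : bf (A + B) x y = bf A x y + bf B x y.
Proof. by rewrite /bf mulmxDr mulmxDl mxE. Qed.
Lemma bfMN n (A : 'M[C]_n) x y : bf (- A) x y = - bf A x y.
Proof. by rewrite /bf mulmxN mulNmx mxE. Qed.
Lemma bfMZ n (A : 'M[C]_n) c x y : bf (c *: A) x y = c * bf A x y.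
Proof. by rewrite /bf -scalemxAr -scalemxAl mxE. Qed.

Lemma psd_decomp_ex n (A : 'M[C]_n) : psd A ->
  exists N (p : 'I_N -> C) (psi : 'I_N -> 'cV[C]_n),
    (forall i, 0 < p i) /\ A = \sum_i p i *: (psi i *m adj (psi i)).
Proof.
move: {2}#|[set j | A j j != 0]| (leqnn #|[set j | A j j != 0]|) => k.
elim: k A => [|k IH] A hk hA.
  exists 0%N, (fun _ => 1), (fun _ => 0); split; first by case.
  rewrite big_ord0; apply: psd_zero => // j; apply/eqP/negP=> /negP hj.
  have : (0 < #|[set j | A j j != 0%R]|)%N by apply/card_gt0P; exists j; rewrite inE.
  by move/leq_trans/(_ hk).
case: (pickP (fun j => A j j != 0)) => [i hi | h0]; last first.
  exists 0%N, (fun _ => 1), (fun _ => 0); split; first by case.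
  by rewrite big_ord0; apply: psd_zero => // j; have := h0 j => /negbFE/eqP.
set a := A i i.
have a0 : 0 < a by rewrite lt_def hi psd_diag.
have ar : a^* = a by rewrite conj_Creal // gtr0_real.
have an0 : a != 0 by rewrite gt_eqF.
set v := A *m ev i.
have vE j : v j 0 = A j i.
  by rewrite mxE; under eq_bigr => l _ do rewrite ev_entry; rewrite sum_delta'.
set A' := A - a^-1 *: (v *m adj v).
have A'E j l : A' j l = A j l - a^-1 * A j i * (A l i)^*.
  by rewrite !mxE big_ord1 -!vE mulrA adjE.
have hA' : psd A'.
  split.
    rewrite /A' adjD adjN adjZ adjM adjK hA.1; congr (_ - _ *: _).
    by rewrite fmorphV; congr (_^-1); exact: ar.
  move=> x; rewrite -/(bf _ _ _).
  set s := bf A (ev i) x.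
  set y := x - (s / a) *: ev i.
  have e1 : bf A' x x = bf A x x - a^-1 * (s^* * s).
    rewrite /A' bfMD bfMN bfMZ.
    have -> : bf (v *m adj v) x x = qf (v *m adj v) x by [].
    rewrite qf_rank1.
    have -> : (adj x *m v) 0 0 = s^*.
      by rewrite /v mulmxA; change ((adj x *m A *m ev i) 0 0) with (bf A x (ev i)); rewrite (bf_conj _ _ hA.1).
    by rewrite conjCK.
  have e2 : bf A y y = bf A x x - a^-1 * (s^* * s).
    rewrite /y !(bfDl, bfDr, bfNl, bfNr, bfZl, bfZr) bf_ev -/a -/s.
    rewrite (bf_conj x (ev i) hA.1) -/s fmorph_div /= ar.
    by field.
  by rewrite e1 -e2; exact: hA.2.
have hlt : (#|[set j | A' j j != 0%R]| < #|[set j | A j j != 0%R]|)%N.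
  apply: proper_card; apply/properP; split.
    apply/subsetP=> j; rewrite !inE; apply: contraNN => /eqP hj.
    by rewrite A'E hj (psd_zero_diag i hA hj) mulr0 mul0r subrr.
  exists i; first by rewrite inE.
  by rewrite inE A'E -/a negbK ar mulVf // mul1r subrr.
have [N [p [psi [hp hA'E]]]] := IH A' (leq_trans (leq_trans hlt hk) (leqnn _)) hA'.
have ha : 0 < a^-1 by rewrite invr_gt0.
have [p' [psi' [hp' E]]] := decomp_snoc psi v hp ha.
exists N.+1, p', psi'; split => //.
by rewrite -E -hA'E /A' subrK.
Qed.


Lemma tens_sumL m n p q k (F : 'I_k -> 'M[C]_(m,n)) (B : 'M[C]_(p,q)) :
  (\sum_i F i) *t B = \sum_i (F i *t B).
Proof.
apply/matrixP=> r s; rewrite !mxE !summxE mulr_suml; apply: eq_bigr=> i _.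
by rewrite !mxE.
Qed.

Lemma tens_sumR m n p q k (A : 'M[C]_(m,n)) (F : 'I_k -> 'M[C]_(p,q)) :
  A *t (\sum_i F i) = \sum_i (A *t F i).
Proof.
apply/matrixP=> r s; rewrite !mxE !summxE mulr_sumr; apply: eq_bigr=> i _.
by rewrite !mxE.
Qed.

Lemma tensZl m n p q c (A : 'M[C]_(m,n)) (B : 'M[C]_(p,q)) :
  (c *: A) *t B = c *: (A *t B).
Proof. by apply/matrixP=> r s; rewrite !mxE mulrA. Qed.

Lemma tensZr m n p q c (A : 'M[C]_(m,n)) (B : 'M[C]_(p,q)) :
  A *t (c *: B) = c *: (A *t B).
Proof. by apply/matrixP=> r s; rewrite !mxE mulrCA. Qed.

Lemma tensDl m n p q (A A' : 'M[C]_(m,n)) (B : 'M[C]_(p,q)) :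
  (A + A') *t B = A *t B + A' *t B.
Proof. by apply/matrixP=> r s; rewrite !mxE mulrDl. Qed.

Lemma tensDr m n p q (A : 'M[C]_(m,n)) (B B' : 'M[C]_(p,q)) :
  A *t (B + B') = A *t B + A *t B'.
Proof. by apply/matrixP=> r s; rewrite !mxE mulrDr. Qed.

Lemma tensNl m n p q (A : 'M[C]_(m,n)) (B : 'M[C]_(p,q)) :
  (- A) *t B = - (A *t B).
Proof. by apply/matrixP=> r s; rewrite !mxE mulNr. Qed.

Lemma psd_tens m n (A : 'M[C]_m) (B : 'M[C]_n) : psd A -> psd B -> psd (A *t B).
Proof.
move=> /psd_decomp_ex [N [p [a [hp ->]]]] /psd_decomp_ex [M [q [b [hq ->]]]].
rewrite tens_sumL; apply: psd_sum=> i; rewrite tens_sumR; apply: psd_sum=> j.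
rewrite tensZl tensZr scalerA; apply: psdZ; first by rewrite mulr_ge0 // ltW.
by rewrite -tensmx_mul -adj_tens; apply: psd_rank1.
Qed.

Lemma psd_gram m n (M : 'M[C]_(m,n)) : psd (adj M *m M).
Proof.
split; first by rewrite adjM adjK.
move=> x; rewrite mulmxA -mulmxA -adjM mxE; apply: sumr_ge0=> k _.
by rewrite adjE mulrC mul_conjC_ge0.
Qed.

Definition rg m n p q (r : 'I_((m * p) * (n * q))) : 'I_((m * n) * (p * q)) :=
    let a := mxtens_unindex (mxtens_unindex r).1 in
    let b := mxtens_unindex (mxtens_unindex r).2 in
    idx (idx a.1 b.1) (idx a.2 b.2).

Lemma regroupE m n p q (W : 'M[C]_((m * n) * (p * q))) r s :
  regroup W r s = W (rg r) (rg s).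
Proof. by rewrite mxE. Qed.

Lemma regroupD m n p q (A B : 'M[C]_((m * n) * (p * q))) :
  regroup (A + B) = regroup A + regroup B.
Proof. by apply/matrixP=> r s; rewrite !mxE /= !mxE. Qed.

Lemma regroupZ m n p q c (A : 'M[C]_((m * n) * (p * q))) :
  regroup (c *: A) = c *: regroup A.
Proof. by apply/matrixP=> r s; rewrite !mxE /= ?mxE. Qed.

Lemma regroup_sum m n p q k (F : 'I_k -> 'M[C]_((m * n) * (p * q))) :
  regroup (\sum_i F i) = \sum_i regroup (F i).
Proof.
apply/matrixP=> r s; rewrite regroupE !summxE; apply: eq_bigr=> i _.
by rewrite regroupE.
Qed.

Definition rv m n p q (v : 'cV[C]_((m * n) * (p * q))) : 'cV[C]_((m * p) * (n * q)) :=
  \col_r v (rg r) 0.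

Lemma regroup_rank1 m n p q (v : 'cV[C]_((m * n) * (p * q))) :
  regroup (v *m adj v) = rv v *m adj (rv v).
Proof. by apply/matrixP=> r s; rewrite !mxE /= !mxE !big_ord1 !mxE. Qed.

Lemma psd_regroup m n p q (W : 'M[C]_((m * n) * (p * q))) : psd W -> psd (regroup W).
Proof.
move=> /psd_decomp_ex [N [a [v [ha ->]]]].
rewrite regroup_sum; apply: psd_sum=> i; rewrite regroupZ regroup_rank1.
by apply: psdZ; [exact: ltW | exact: psd_rank1].
Qed.

Lemma idxP m n (k : 'I_(m * n)) : exists i j, k = idx i j.
Proof. by exists (mxtens_unindex k).1, (mxtens_unindex k).2; rewrite /idx -surjective_pairing mxtens_unindexK. Qed.

Lemma rg_idx m n p q (a1 : 'I_m) (a2 : 'I_p) (b1 : 'I_n) (b2 : 'I_q) :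
  rg (idx (idx a1 a2) (idx b1 b2)) = idx (idx a1 b1) (idx a2 b2).
Proof. by rewrite /rg /idx !mxtens_indexK. Qed.

Lemma ptransB_idx m n (W : 'M[C]_(m * n)) a b a' b' :
  ptransB W (idx a b) (idx a' b') = W (idx a b') (idx a' b).
Proof. by rewrite mxE /idx !mxtens_indexK. Qed.

Lemma tens_idx m n p q (A : 'M[C]_(m,n)) (B : 'M[C]_(p,q)) i j k l :
  (A *t B) (idx i j) (idx k l) = A i k * B j l.
Proof. exact: tensmxE. Qed.

Lemma ptransB_regroup m n p q (X : 'M[C]_(m * n)) (P : 'M[C]_(p * q)) :
  ptransB (regroup (X *t P)) = regroup (ptransB X *t ptransB P).
Proof.
apply/matrixP=> r s.
move: (idxP r) => [A [B ->]]; move: (idxP A) => [a1 [a2 ->]]; move: (idxP B) => [b1 [b2 ->]].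
move: (idxP s) => [A' [B' ->]]; move: (idxP A') => [a1' [a2' ->]]; move: (idxP B') => [b1' [b2' ->]].
by rewrite ptransB_idx !regroupE !rg_idx !tens_idx !ptransB_idx.
Qed.

Lemma ptransBD m n (A B : 'M[C]_(m * n)) : ptransB (A + B) = ptransB A + ptransB B.
Proof. by apply/matrixP=> r s; rewrite !mxE /= ?mxE. Qed.

Lemma ptransBZ m n c (A : 'M[C]_(m * n)) : ptransB (c *: A) = c *: ptransB A.
Proof. by apply/matrixP=> r s; rewrite !mxE /= ?mxE. Qed.


Lemma idx_eq m n (a a' : 'I_m) (b b' : 'I_n) :
  (idx a b == idx a' b') = (a == a') && (b == b').
Proof. by rewrite /idx (inj_eq (can_inj (@mxtens_indexK m n))) xpair_eqE. Qed.

Lemma one_idx m n (a a' : 'I_m) (b b' : 'I_n) :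
  (1%:M : 'M[C]_(m * n)) (idx a b) (idx a' b') = (a == a')%:R * (b == b')%:R.
Proof. by rewrite mxE idx_eq -natrM mulnb. Qed.

Definition swapm d : 'M[C]_(d * d) :=
  \matrix_(r, s) (((mxtens_unindex r).1 == (mxtens_unindex s).2)%:R *
                  ((mxtens_unindex r).2 == (mxtens_unindex s).1)%:R).

Lemma swap_idx d (a b a' b' : 'I_d) :
  swapm d (idx a b) (idx a' b') = (a == b')%:R * (b == a')%:R.
Proof. by rewrite mxE /idx !mxtens_indexK. Qed.

Lemma Omega_idx d (a b : 'I_d) :
  Omega C d (idx a b) 0 = (a == b)%:R * (sqrtC d%:R)^-1.
Proof. by rewrite mxE /idx mxtens_indexK /=; case: (a == b); rewrite ?mul1r ?mul0r. Qed.

Lemma sqrt_conj d : ((sqrtC (d%:R : C))^-1)^* = (sqrtC (d%:R : C))^-1.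
Proof. by rewrite conj_Creal // realV ger0_real // sqrtC_ge0 ler0n. Qed.

Lemma omega_idx d (a b a' b' : 'I_d) :
  omega C d (idx a b) (idx a' b') = (a == b)%:R * (a' == b')%:R * (d%:R)^-1.
Proof.
rewrite mxE big_ord1 adjE !Omega_idx rmorphM rmorph_nat /= sqrt_conj.
rewrite mulrACA -invfM -expr2 sqrtCK; ring.
Qed.

Lemma mat_idxP m n p q (A B : 'M[C]_(m * n, p * q)) :
  (forall a b a' b', A (idx a b) (idx a' b') = B (idx a b) (idx a' b')) -> A = B.
Proof.
move=> h; apply/matrixP=> r s.
by move: (idxP r) (idxP s) => [a [b ->]] [a' [b' ->]]; apply: h.
Qed.

Lemma ptransB1 d : ptransB (1%:M : 'M[C]_(d * d)) = 1%:M.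
Proof.
by apply: mat_idxP=> a b a' b'; rewrite ptransB_idx !one_idx [(b' == b)]eq_sym.
Qed.

Lemma ptransB_omega d : ptransB (omega C d) = (d%:R)^-1 *: swapm d.
Proof.
apply: mat_idxP=> a b a' b'; rewrite ptransB_idx omega_idx mxE swap_idx.
by rewrite [(a' == b)]eq_sym mulrC.
Qed.

Lemma adj_swap d : adj (swapm d) = swapm d.
Proof.
apply: mat_idxP=> a b a' b'; rewrite adjE !swap_idx rmorphM !rmorph_nat.
by rewrite mulrC (eq_sym b') (eq_sym a').
Qed.

Lemma adj1 n : adj (1%:M : 'M[C]_n) = 1%:M.
Proof. by rewrite adj_scalar rmorph1. Qed.

Lemma swap_swap d : swapm d *m swapm d = 1%:M.
Proof.
apply: mat_idxP=> a b a' b'; rewrite mxE sum_idx one_idx.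
under eq_bigr => c _ do under eq_bigr => e _ do
  rewrite !swap_idx (eq_sym a) -!mulrA [(b == c)%:R * _]mulrCA.
under eq_bigr => c _ do rewrite sum_delta.
by rewrite sum_delta mulrC.
Qed.

Lemma psd_dim0 (A : 'M[C]_0) : psd A.
Proof.
split; first by apply/matrixP=> [[]].
by move=> v; rewrite mxE big_ord0.
Qed.

Lemma psd_1pmF d (e : C) : (e = 1 \/ e = -1) -> psd (1%:M + e *: swapm d).
Proof.
move=> he.
have -> : 1%:M + e *: swapm d = 2^-1 *: (adj (1%:M + e *: swapm d) *m (1%:M + e *: swapm d)).
  rewrite adjD adj1 adjZ adj_swap.
  have -> : e^* = e by case: he => ->; rewrite ?rmorphN rmorph1.
  rewrite mulmxDl !mulmxDr !mul1mx mulmx1 -scalemxAl.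
  have -> : swapm d *m (e *: swapm d) = e *: 1%:M by rewrite -scalemxAr swap_swap.
  rewrite scalerA.
  have -> : e * e = 1 by case: he => ->; rewrite ?mulrNN mulr1.
  rewrite scale1r [e *: swapm d + 1%:M]addrC -mulr2n -scaler_nat scalerA mulVf ?scale1r //.
  by rewrite pnatr_eq0.
by apply: psdZ; [rewrite invr_ge0 ler0n | exact: psd_gram].
Qed.


Lemma psd_empty n (A : 'M[C]_n) : n = 0%N -> psd A.
Proof.
move=> hn; split.
  by apply/matrixP=> i; have := ltn_ord i; rewrite {2}hn.
move=> v; rewrite mxE big1 // => i _.
by have := ltn_ord i; rewrite {2}hn.
Qed.

Lemma OmegaN d : (0 < d)%N -> adj (Omega C d) *m Omega C d = 1%:M.
Proof.
move=> d0; rewrite [LHS]scal_mx11; congr (_%:M).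
rewrite mxE.
have -> : \sum_j adj (Omega C d) 0 j * Omega C d j 0 = \sum_j omega C d j j.
  by apply: eq_bigr=> j _; rewrite [RHS]mxE big_ord1 mulrC !mxE.
rewrite sum_idx; under eq_bigr => a _ do under eq_bigr => b _ do
  rewrite omega_idx (eq_sym a b) -mulrA.
under eq_bigr => a _ do rewrite sum_delta eqxx mul1r.
by rewrite sumr_const card_ord -[_ *+ d]mulr_natr mulVf // pnatr_eq0 -lt0n.
Qed.

Lemma adj_omega d : adj (omega C d) = omega C d.
Proof. by rewrite /omega adjM adjK. Qed.

Lemma psd_1momega d : psd (1%:M - omega C d).
Proof.
case: d => [|d]; first by apply: psd_empty.
have hO := OmegaN (ltn0Sn d).
have -> : 1%:M - omega C d.+1 = adj (1%:M - omega C d.+1) *m (1%:M - omega C d.+1).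
  rewrite adjD adjN adj1 adj_omega mulmxBl !mulmxBr mul1mx mulmx1.
  have -> : omega C d.+1 *m omega C d.+1 = omega C d.+1.
    by rewrite /omega mulmxA -(mulmxA (Omega C d.+1)) hO mulmx1.
  by rewrite mul1mx subrr subr0.
exact: psd_gram.
Qed.

Lemma psd_omega d : psd (omega C d).
Proof. exact: psd_rank1. Qed.

Lemma ptransBN m n (A : 'M[C]_(m * n)) : ptransB (- A) = - ptransB A.
Proof. by apply/matrixP=> r s; rewrite !mxE. Qed.

Lemma tensNr m n p q (A : 'M[C]_(m,n)) (B : 'M[C]_(p,q)) :
  A *t (- B) = - (A *t B).
Proof. by apply/matrixP=> r s; rewrite !mxE mulrN. Qed.

Lemma psd_ppt_main d1 d2 (X Y : 'M[C]_(d1 * d1)) :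
  psd X -> psd Y ->
  psd ((d2%:R - 1) *: ptransB X + ptransB Y) ->
  psd ((d2%:R + 1) *: ptransB X - ptransB Y) ->
  let Z := regroup (X *t (1%:M - omega C d2) + Y *t omega C d2) in
  psd Z /\ ppt Z.
Proof.
move=> hX hY h1 h2; cbv zeta.
have hZ : psd (regroup (X *t (1%:M - omega C d2) + Y *t omega C d2)).
  apply: psd_regroup; apply: psdD; apply: psd_tens => //.
    exact: psd_1momega.
  exact: psd_omega.
split=> //; split=> //.
case: d2 h1 h2 hZ => [|d] h1 h2 hZ.
  by apply: psd_empty; rewrite !muln0.
rewrite regroupD ptransBD !ptransB_regroup ptransBD ptransBN ptransB1 ptransB_omega.
set Xg := ptransB X; set Yg := ptransB Y; set S := swapm d.+1; set e := (d.+1%:R : C).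
rewrite -regroupD.
have -> : Xg *t (1%:M - e^-1 *: S) + Yg *t (e^-1 *: S) =
   (2 * e)^-1 *: (((e - 1) *: Xg + Yg) *t (1%:M + 1 *: S) +
                  ((e + 1) *: Xg - Yg) *t (1%:M + (-1) *: S)).
  rewrite !(tensDl, tensDr, tensZl, tensZr, tensNl, tensNr).
  set T1 := Xg *t 1%:M; set T2 := Xg *t S; set T3 := Yg *t 1%:M; set T4 := Yg *t S.
  have e0 : e != 0 by rewrite pnatr_eq0.
  have t0 : (2 : C) != 0 by rewrite pnatr_eq0.
  clearbody T1 T2 T3 T4 e.
  apply/matrixP=> r s; rewrite !mxE.
  by field.
apply: (@psd_regroup d1 d1 d.+1 d.+1); apply: psdZ.
  by rewrite invr_ge0 mulr_ge0 ?ler0n.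
apply: psdD; apply: psd_tens => //; apply: psd_1pmF; by [left | right].
Qed.


Lemma unindex_idx m n (a : 'I_m) (b : 'I_n) : mxtens_unindex (idx a b) = (a, b).
Proof. exact: mxtens_indexK. Qed.

Lemma idx_unindex m n (K : 'I_(m * n)) : idx (mxtens_unindex K).1 (mxtens_unindex K).2 = K.
Proof. by rewrite /idx -surjective_pairing mxtens_unindexK. Qed.

Definition Kmat d1 d2 (c : 'I_(d1 * d1) -> C) : 'M[C]_(d2 * d2, (d1 * d2) * (d1 * d2)) :=
  \matrix_(k, r)
    (((mxtens_unindex (mxtens_unindex r).1).2 == (mxtens_unindex k).1)%:R *
     (((mxtens_unindex (mxtens_unindex r).2).2 == (mxtens_unindex k).2)%:R *
      c (idx (mxtens_unindex (mxtens_unindex r).1).1 (mxtens_unindex (mxtens_unindex r).2).1))).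

Lemma K_idx d1 d2 c (a2 b2 : 'I_d2) (a1 : 'I_d1) a2' b1 b2' :
  Kmat d2 c (idx a2 b2) (idx (idx a1 a2') (idx b1 b2')) =
  (a2' == a2)%:R * ((b2' == b2)%:R * c (idx a1 b1)).
Proof. by rewrite mxE !unindex_idx. Qed.

Lemma K_sum d1 d2 c (a2 b2 : 'I_d2) (g : 'I_((d1 * d2) * (d1 * d2)) -> C) :
  \sum_r Kmat d2 c (idx a2 b2) r * g r =
  \sum_a1 \sum_b1 c (idx a1 b1) * g (idx (idx a1 a2) (idx b1 b2)).
Proof.
rewrite sum_idx sum_idx; apply: eq_bigr => a1 _.
under eq_bigr => a2' _ do rewrite sum_idx.
under eq_bigr => a2' _ do under eq_bigr => b1 _ do under eq_bigr => b2' _ do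
  rewrite K_idx -mulrA.
under eq_bigr => a2' _ do under eq_bigr => b1 _ do rewrite -mulr_sumr.
under eq_bigr => a2' _ do rewrite -mulr_sumr.
rewrite sum_delta; apply: eq_bigr => b1 _.
under eq_bigr => b2' _ do rewrite -mulrA.
by rewrite sum_delta.
Qed.

Lemma K_sum' d1 d2 c (a2 b2 : 'I_d2) (g : 'I_((d1 * d2) * (d1 * d2)) -> C) :
  \sum_r Kmat d2 c (idx a2 b2) r * g r =
  \sum_K c K * g (idx (idx (mxtens_unindex K).1 a2) (idx (mxtens_unindex K).2 b2)).
Proof.
rewrite K_sum [RHS]sum_idx; apply: eq_bigr => a1 _; apply: eq_bigr => b1 _.
by rewrite unindex_idx.
Qed.

Lemma K_conj d1 d2 c k s :
  (Kmat d2 c k s)^* = Kmat d2 (fun K : 'I_(d1 * d1) => (c K)^*) k s.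
Proof. by rewrite !mxE !rmorphM !rmorph_nat. Qed.

Lemma qf_sum n k (F : 'I_k -> 'M[C]_n) x : qf (\sum_i F i) x = \sum_i qf (F i) x.
Proof. by rewrite /qf mulmx_sumr mulmx_suml summxE. Qed.

Lemma Z_entry d1 d2 (X Y : 'M[C]_(d1 * d1)) (P Q : 'M[C]_(d2 * d2)) a1 a2 b1 b2 a1' a2' b1' b2' :
  regroup (X *t P + Y *t Q) (idx (idx a1 a2) (idx b1 b2)) (idx (idx a1' a2') (idx b1' b2')) =
  X (idx a1 b1) (idx a1' b1') * P (idx a2 b2) (idx a2' b2') +
  Y (idx a1 b1) (idx a1' b1') * Q (idx a2 b2) (idx a2' b2').
Proof. by rewrite regroupE !rg_idx mxE !tens_idx. Qed.

Lemma KZK d1 d2 (X Y : 'M[C]_(d1 * d1)) (P Q : 'M[C]_(d2 * d2)) (alpha : 'cV[C]_(d1 * d1)) :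
  let K := Kmat d2 (fun K => (alpha K 0)^*) in
  K *m regroup (X *t P + Y *t Q) *m adj K = qf X alpha *: P + qf Y alpha *: Q.
Proof.
move=> K; apply: mat_idxP => a2 b2 a2' b2'.
rewrite [LHS]mxE.
under eq_bigr => s _ do rewrite adjE K_conj mulrC.
rewrite K_sum'.
under eq_bigr => L _ do rewrite mxE K_sum'.
under eq_bigr => L _ do under eq_bigr => K0 _ do rewrite Z_entry !idx_unindex.
under eq_bigr => L _ do rewrite mulr_sumr.
rewrite exchange_big /=.
rewrite !mxE !qfE !mulr_suml -big_split; apply: eq_bigr => K0 _.
rewrite !mulr_suml -big_split; apply: eq_bigr => L _ /=.
by rewrite conjCK; ring.
Qed.


Lemma mxBE m n (A B : 'M[C]_(m, n)) i j : (A - B) i j = A i j - B i j.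
Proof. by rewrite !mxE. Qed.
Lemma mxDE m n (A B : 'M[C]_(m, n)) i j : (A + B) i j = A i j + B i j.
Proof. by rewrite !mxE. Qed.
Lemma mxZE m n c (A : 'M[C]_(m, n)) i j : (c *: A) i j = c * A i j.
Proof. by rewrite !mxE. Qed.

Lemma qfZ n c (A : 'M[C]_n) x : qf (c *: A) x = c * qf A x.
Proof. exact: bfMZ. Qed.

Lemma cv_norm0 n (x : 'cV[C]_n) : (adj x *m x) 0 0 = 0 -> x = 0.
Proof.
rewrite mxE => /eqP; rewrite psumr_eq0 => [/allP h|k _]; last first.
  by rewrite adjE mulrC mul_conjC_ge0.
apply/matrixP=> k j; rewrite ord1 mxE.
have := h k (mem_index_enum _); rewrite adjE mulrC mul_conjC_eq0.
by move/eqP.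
Qed.

Lemma adj_col_entry n (x y : 'cV[C]_n) : (adj x *m y) 0 0 = ((adj y *m x) 0 0)^*.
Proof. by rewrite -adjE adjM adjK. Qed.

Lemma span_omega d N (p : 'I_N -> C) (phi : 'I_N -> 'cV[C]_(d * d)) c :
  (0 < d)%N -> (forall i, 0 < p i) ->
  \sum_i p i *: (phi i *m adj (phi i)) = c *: omega C d ->
  forall i, phi i = (adj (Omega C d) *m phi i) 0 0 *: Omega C d.
Proof.
move=> d0 hp hS i.
set l := (adj (Omega C d) *m phi i) 0 0.
set x := phi i - l *: Omega C d.
have hO := OmegaN d0.
have hxO : (adj x *m Omega C d) 0 0 = 0.
  rewrite /x adjD adjN adjZ mulmxDl mulNmx -scalemxAl hO mxBE mxZE [_%:M _ _]mxE eqxx mulr1n mulr1.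
  by rewrite adj_col_entry -/l subrr.
have hq : qf (\sum_i p i *: (phi i *m adj (phi i))) x = 0.
  rewrite hS qfZ qf_rank1.
  by rewrite adj_col_entry; rewrite adj_col_entry in hxO; rewrite hxO rmorph0 !mul0r mulr0.
move: hq; rewrite qf_sum => /eqP; rewrite psumr_eq0 => [/allP h|j _]; last first.
  rewrite /qf -scalemxAr -scalemxAl mxE -/(qf _ _) qf_rank1.
  by apply: mulr_ge0; [exact: ltW | exact: mul_conjC_ge0].
have := h i (mem_index_enum _).
rewrite qfZ qf_rank1 mulf_eq0 gt_eqF //=.
rewrite mul_conjC_eq0 => /eqP hxi.
have : x = 0.
  apply: cv_norm0.
  have -> : (adj x *m x) = adj x *m phi i - l *: (adj x *m Omega C d).
    by rewrite /x mulmxBr scalemxAr.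
  by rewrite mxBE mxZE hxi hxO mulr0 subrr.
by move/eqP; rewrite subr_eq0 => /eqP.
Qed.

Lemma rank_sum_le m n k (F : 'I_k -> 'M[C]_(m, n)) :
  (\rank (\sum_i F i)%R <= \sum_i \rank (F i))%N.
Proof.
elim/big_rec2: _ => [|i M x _ h]; first by rewrite mxrank0.
by apply: leq_trans (mxrank_add _ _) _; rewrite leq_add2l.
Qed.

Lemma gram0 m n (W : 'M[C]_(m, n)) : W *m adj W = 0 -> W = 0.
Proof.
move=> h; apply/matrixP => i j; rewrite mxE.
have : (W *m adj W) i i = 0 by rewrite h mxE.
rewrite mxE => /eqP; rewrite psumr_eq0 => [/allP h2|k _]; last first.
  by rewrite adjE mul_conjC_ge0.
by have := h2 j (mem_index_enum _); rewrite adjE mul_conjC_eq0 => /eqP.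
Qed.

Lemma rank_gram_ge m n (N : 'M[C]_(m, n)) : (\rank N <= \rank (N *m adj N))%N.
Proof.
set G := N *m adj N.
have hsub : (kermx G <= kermx N)%MS.
  apply/sub_kermxP; apply: gram0.
  rewrite adjM mulmxA -(mulmxA (kermx G)) -/G mulmx_ker mul0mx //.
have := mxrankS hsub; rewrite !mxrank_ker.
have := rank_leq_row N; have := rank_leq_row G.
move=> h1 h2 h3.
lia.
Qed.


Definition Mpsi d1 d2 (psi : 'cV[C]_((d1 * d2) * (d1 * d2))) : 'M[C]_(d1 * d2) :=
  \matrix_(A, B) psi (idx A B) 0.

Lemma schmidt_ge d1 d2 (psi : 'cV[C]_((d1 * d2) * (d1 * d2))) :
  (\rank (Mpsi psi) <= schmidt_rank psi)%N.
Proof.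
have -> : schmidt_rank psi = \rank ((Mpsi psi)^T *m adj ((Mpsi psi)^T)).
  rewrite /schmidt_rank; congr (\rank _).
  apply/matrixP => j l; rewrite !mxE; apply: eq_bigr => i _.
  by rewrite !mxE big_ord1 !mxE.
by rewrite -(mxrank_tr (Mpsi psi)) rank_gram_ge.
Qed.

Definition Emat d1 d2 (a1 : 'I_d1) : 'M[C]_(d2, d1 * d2) :=
  \matrix_(a2, A) (A == idx a1 a2)%:R.
Definition Fmat d1 d2 (c : 'I_(d1 * d1) -> C) (a1 : 'I_d1) : 'M[C]_(d1 * d2, d2) :=
  \matrix_(B, b2) (((mxtens_unindex B).2 == b2)%:R * c (idx a1 (mxtens_unindex B).1)).

Lemma Phi_rank d1 d2 (c : 'I_(d1 * d1) -> C) (psi : 'cV[C]_((d1 * d2) * (d1 * d2))) :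
  (\rank (\matrix_(a2, b2) (Kmat d2 c *m psi) (idx a2 b2) 0%R) <= d1 * \rank (Mpsi psi))%N.
Proof.
have -> : \matrix_(a2, b2) (Kmat d2 c *m psi) (idx a2 b2) 0 =
          \sum_(a1 < d1) (Emat d2 a1 *m Mpsi psi *m Fmat d2 c a1).
  apply/matrixP => a2 b2; rewrite mxE summxE mxE K_sum; apply: eq_bigr => a1 _.
  rewrite mxE sum_idx; apply: eq_bigr => b1 _.
  under eq_bigr => b2' _ do rewrite [Fmat _ _ _ _ _]mxE unindex_idx /= mxE.
  under eq_bigr => b2' _ do under eq_bigr => A _ do rewrite !mxE.
  under eq_bigr => b2' _ do rewrite sum_delta mulrCA.
  by rewrite sum_delta mulrC.
apply: leq_trans (rank_sum_le _) _.
have h a1 : (\rank (Emat d2 a1 *m Mpsi psi *m Fmat d2 c a1) <= \rank (Mpsi psi))%N.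
  exact: leq_trans (mxrankM_maxl _ _) (mxrankM_maxr _ _).
apply: (@leq_trans (\sum_(a1 < d1) \rank (Mpsi psi))%N).
  by apply: leq_sum => a1 _; exact: h.
by rewrite big_const_ord iter_addn addn0 mulnC.
Qed.

Lemma SN_core d1 d2 (X Y : 'M[C]_(d1 * d1)) (alpha : 'cV[C]_(d1 * d1)) N
    (p : 'I_N -> C) (psi : 'I_N -> 'cV[C]_((d1 * d2) * (d1 * d2))) :
  (0 < d2)%N -> qf X alpha = 0 -> 0 < qf Y alpha -> (forall i, 0 < p i) ->
  regroup (X *t (1%:M - omega C d2) + Y *t omega C d2) =
    \sum_i p i *: (psi i *m adj (psi i)) ->
  exists i, (d2 <= d1 * schmidt_rank (psi i))%N.
Proof.
move=> d0 hX hY hp hZ.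
set c := fun K : 'I_(d1 * d1) => (alpha K 0)^*.
set K := Kmat d2 c.
set phi := fun i => K *m psi i.
have hS : \sum_i p i *: (phi i *m adj (phi i)) = qf Y alpha *: omega C d2.
  have := KZK X Y (1%:M - omega C d2) (omega C d2) alpha.
  rewrite /= -/c -/K hZ hX scale0r add0r => <-.
  rewrite mulmx_sumr mulmx_suml; apply: eq_bigr => i _.
  by rewrite /phi adjM -scalemxAr -scalemxAl !mulmxA.
have hspan := span_omega d0 hp hS.
set l := fun i => (adj (Omega C d2) *m phi i) 0 0.
have [i hi] : exists i, l i != 0.
  case: (pickP (fun i => l i != 0)) => [i hi|h0]; first by exists i.
  exfalso.
  have h0' : forall i, phi i = 0.
    by move=> i; rewrite (hspan i) -/(l i); have := h0 i => /negbFE/eqP ->; rewrite scale0r.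
  move: hS; under eq_bigr => i _ do rewrite h0' mul0mx scaler0.
  rewrite big1 // => /matrixP /(_ (idx (Ordinal d0) (Ordinal d0)) (idx (Ordinal d0) (Ordinal d0))).
  rewrite mxE mxZE omega_idx eqxx mul1r mul1r => /esym /eqP.
  by rewrite mulf_eq0 invr_eq0 pnatr_eq0 gt_eqF //= eqn0Ngt d0.
exists i.
have sq0 : sqrtC (d2%:R : C) != 0 by rewrite sqrtC_eq0 pnatr_eq0 -lt0n.
have eP : \matrix_(a2, b2) (K *m psi i) (idx a2 b2) 0 = (l i / sqrtC d2%:R)%:M.
  apply/matrixP => a2 b2.
  have -> : (K *m psi i) = phi i by [].
  rewrite mxE (hspan i) mxZE Omega_idx -/(l i) !mxE.
  by case: (a2 == b2); rewrite ?mul1r ?mulr1n ?mul0r ?mulr0 ?mulr0n.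
have rk : \rank (\matrix_(a2, b2) (K *m psi i) (idx a2 b2) 0%R) = d2.
  rewrite eP -scalemx1 mxrank_scale_nz ?mxrank1 //.
  by rewrite mulf_neq0 // invr_eq0.
rewrite -{1}rk; apply: leq_trans (Phi_rank c (psi i)) _.
by rewrite leq_mul2l schmidt_ge orbT.
Qed.

End Q.

Unset Implicit Arguments.

Theorem theorem3 (R : realType) (d1 d2 : nat) (X Y : 'M[R[i]]_(d1 * d1)) :
  psd X -> psd Y ->
  psd ((d2%:R - 1) *: ptransB X + ptransB Y) ->
  psd ((d2%:R + 1) *: ptransB X - ptransB Y) ->
  (exists alpha : 'cV[R[i]]_(d1 * d1),
      (adj alpha *m X *m alpha) 0 0 = 0 /\ 0 < (adj alpha *m Y *m alpha) 0 0) ->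
  let Z := regroup (X *t (1%:M - omega R[i] d2) + Y *t omega R[i] d2) in
  [/\ psd Z, ppt Z & Num.ceil ((d2%:R / d1%:R) : R) <= (SN Z)%:Z].
Proof.
move=> hX hY h1 h2 [alpha [hXa hYa]].
have [hZ hppt] := psd_ppt_main hX hY h1 h2.
cbv zeta; split; [exact: hZ | exact: hppt |].
have d1p : (0 < d1)%N.
  rewrite lt0n; apply/eqP => e0.
  move: hYa; rewrite mxE big1 ?ltxx // => k _; exfalso.
  by have := ltn_ord k; move: (nat_of_ord k) => kk; rewrite e0.
rewrite /SN; case: pselect => [h|hn]; last first.
  exfalso; apply: hn.
  have [N [p [psi [hp hE]]]] := psd_decomp_ex hZ.
  exists (d1 * d2)%N, N, p, psi; split => // i.
  exact: rank_leq_row.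
case: ex_minnP => r /asboolP [N [p [psi [hp hE hr]]]] _.
rewrite ceil_le_int.
have hd : (d2 <= d1 * r)%N.
  case: (posnP d2) => [->|d2p] //.
  have [i hi] := SN_core d2p hXa hYa hp hE.
  exact: leq_trans hi (leq_mul (leqnn _) (hr i)).
rewrite ler_pdivrMr ?ltr0n // pmulrn -natrM ler_nat mulnC //.
Qed.
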